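(* Let $n_u, K, C, I$ be positive integers. For each $c\in\{1,\dots,C\}$, each $k\in\{1,\dots,K\}$ and each $i\in\{0,1,\dots,I\}$, let $\hat{\Sigma}^{i,c}_k$ be a symmetric positive definite $n_u\times n_u$ real matrix written as $\hat{\Sigma}^{i,c}_k=(\hat{\Sigma}^{\frac12,i,c}_k)^\top \hat{\Sigma}^{\frac12,i,c}_k$ for some square-root factor $\hat{\Sigma}^{\frac12,i,c}_k\in\mathbb{R}^{n_u\times n_u}$. Set $\hat{\sigma}^{i,c}_k=\operatorname{vec}(\hat{\Sigma}^{\frac12,i,c}_k)\in\mathbb{R}^{n_u^2}$ and $\hat{\sigma}^{i,c}=\operatorname{col}(\hat{\sigma}^{i,c}_1,\dots,\hat{\sigma}^{i,c}_K)\in\mathbb{R}^{n_u^2K}$. Assume that for every $c$ and every $i\in\{0,\dots,I-1\}$ the update $$\hat{\sigma}^{i+1,c}=\mathcal{I}^{i,c}_\Sigma\,\hat{\sigma}^{i,c}$$ holds, where $\mathcal{I}^{i,c}_\Sigma$ is a symmetric $n_u^2K\times n_u^2K$ matrix satisfying $0\le \mathcal{I}^{i,c}_\Sigma\le \mathbf{I}$ in the positive semidefinite (Loewner) order. For each $k$ define $$\Sigma^L_k=\left(\frac{1}{C}\sum_{c=1}^C\big(\operatorname{diag}(\sigma(\hat{\Sigma}^{I,c}_k))\big)^{-1}\right)^{-1},$$ where $\sigma(\hat{\Sigma}^{I,c}_k)$ denotes the vector of the $n_u$ eigenvalues of $\hat{\Sigma}^{I,c}_k$ and $\operatorname{diag}(\cdot)$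 the diagonal matrix with that vector on its diagonal. Then $$\sum_{k=1}^K \operatorname{Tr}\big((\Sigma^L_k)^{-1}\big)\;\ge\;\frac{n_u^2K^2}{C}\sum_{c=1}^C\left(\sum_{k=1}^K\operatorname{Tr}\hat{\Sigma}^{0,c}_k\right)^{-1}.$$
   Context: Here $\operatorname{vec}(\cdot)$ stacks the columns of a matrix into a single vector, $\operatorname{col}(\cdot)$ denotes vertical concatenation of vectors, and $\mathbf{I}$ is the identity matrix. In the paper, $\hat{\Sigma}^{i,c}_k$ is the covariance of a time-varying linear Gaussian control policy $\mathcal{N}(\hat F^{i,c}_k x_k+\hat e^{i,c}_k,\hat{\Sigma}^{i,c}_k)$ at time step $k$ of an episode of length $K$, obtained at iteration $i$ of an expectation-maximization procedure started from the $c$-th of $C$ initial-state distributions, with control dimension $n_u$; $\mathcal{I}^{i,c}_\Sigma$ is the principal block (corresponding to the covariance parameters) of the EM information matrix, and $\Sigma^L_k$ is the covariance of the learned global (neural-network) Gaussian policy at time step $k$. *)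

(* Defs.v *)
From HB Require Import structures.
From mathcomp Require Import all_boot all_order all_algebra.
Set Implicit Arguments. Unset Strict Implicit. Unset Printing Implicit Defensive.
Import Order.TTheory GRing.Theory Num.Theory.
Local Open Scope ring_scope.

Definition symmetric_mx (R : ringType) (n : nat) (A : 'M[R]_n) : Prop := A^T = A.

Definition posdef_mx (R : realFieldType) (n : nat) (A : 'M[R]_n) : Prop :=
  A^T = A /\ forall v : 'rV[R]_n, v != 0 -> 0 < (v *m A *m v^T) 0 0.

Definition psd_mx (R : realFieldType) (n : nat) (A : 'M[R]_n) : Prop :=
  A^T = A /\ forall v : 'rV[R]_n, 0 <= (v *m A *m v^T) 0 0.

(* vec: stack the columns of S into one column vector.
   mxvec is row-major, so the columns of S are the rows of S^T. *)
Definition vecc (R : Type) (n : nat) (S : 'M[R]_n) : 'cV[R]_(n * n) :=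
  (mxvec S^T)^T.

(* col(vec S_1, ..., vec S_K): vertical concatenation of the vecs. *)
Definition colvec (R : Type) (n K : nat) (S : 'I_K -> 'M[R]_n)
  : 'cV[R]_(K * (n * n)) :=
  (mxvec (\matrix_(k < K) (vecc (S k))^T))^T.

Definition eigvals_vec (R : comRingType) (n : nat) (A : 'M[R]_n) (s : 'rV[R]_n)
  : Prop := char_poly A = \prod_(j < n) ('X - (s 0 j)%:P).

(* Main.v *)
Require Import Defs.
From HB Require Import structures.
From mathcomp Require Import all_boot all_order all_algebra.
From mathcomp Require Import ring lra.
Import Order.TTheory GRing.Theory Num.Theory.
Local Open Scope ring_scope.

Lemma mxvec_sumsq (R : ringType) m n (A : 'M[R]_(m, n)) :
  \sum_(x < m * n) (mxvec A 0 x) ^+ 2 = \sum_(i < m) \sum_(j < n) (A i j) ^+ 2.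
Proof.
rewrite (reindex (uncurry (@mxvec_index m n))) /=; last exact: curry_mxvec_bij.
rewrite pair_big /=; apply: eq_bigr => -[i j] _ /=; by rewrite mxvecE.
Qed.

Lemma sum_tr_colvec (R : comRingType) n K (S : 'I_K -> 'M[R]_n) :
  \sum_(k < K) \tr ((S k)^T *m S k) = ((colvec S)^T *m colvec S) 0 0.
Proof.
rewrite mxE /colvec.
under [RHS]eq_bigr do rewrite !mxE -expr2.
rewrite mxvec_sumsq; apply: eq_bigr => k _.
rewrite /vecc.
under [RHS]eq_bigr do rewrite !mxE.
rewrite mxvec_sumsq /mxtrace; apply: eq_bigr => a _.
rewrite mxE; apply: eq_bigr => b _; by rewrite !mxE expr2.
Qed.

Lemma zmod_id (V : zmodType) (o a b c : V) :
  o - b = (o - a) + (b - c) + (a - b - (b - c)).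
Proof.
by rewrite -addrA [(b - c) + _]addrC subrK addrA subrK.
Qed.

Lemma addE (R : zmodType) m n (A B : 'M[R]_(m, n)) i j : (A + B) i j = A i j + B i j.
Proof. by rewrite !mxE. Qed.

Lemma contract (R : realFieldType) N (A : 'M[R]_N) (x : 'cV[R]_N) :
  psd_mx A -> psd_mx (1%:M - A) ->
  ((A *m x)^T *m (A *m x)) 0 0 <= (x^T *m x) 0 0.
Proof.
move=> [AT pA] [BT pB].
set v := x^T.
have q1 : (A *m x)^T *m (A *m x) = v *m (A *m A) *m v^T.
  by rewrite trmx_mul AT trmxK !mulmxA.
have q2 : x^T *m x = v *m 1%:M *m v^T by rewrite mulmx1 trmxK.
rewrite q1 q2 -subr_ge0.
have -> : (v *m 1%:M *m v^T) 0 0 - (v *m (A *m A) *m v^T) 0 0 =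
   (v *m (1%:M - A *m A) *m v^T) 0 0.
 by rewrite mulmxBr mulmxBl /= !mxE.
have e0 : 1%:M - A *m A = (1%:M - A) + (A *m A - A *m A *m A) + (A - A *m A - (A *m A - A *m A *m A)) by apply: zmod_id.
rewrite e0.
have e1 : A *m A - A *m A *m A = A *m (1%:M - A) *m A.
  by rewrite mulmxBr mulmx1 mulmxBl.
have e2 : A - A *m A - (A *m A - A *m A *m A) = (1%:M - A) *m A *m (1%:M - A).
  by rewrite mulmxBr mulmx1 !mulmxBl mul1mx.
rewrite e2 e1; move: (1%:M - A) BT pB => B BT pB.
rewrite !mulmxDr !mulmxDl !addE.
apply: addr_ge0; first apply: addr_ge0.
- exact: pB.
- have := pB (v *m A); by rewrite trmx_mul AT !mulmxA.
- have := pA (v *m B); by rewrite trmx_mul BT !mulmxA.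
Qed.

Lemma eig_pos (R : realFieldType) n (A : 'M[R]_n) (s : 'rV[R]_n) :
  posdef_mx A -> eigvals_vec A s -> forall j, 0 < s 0 j.
Proof.
move=> [AT pA] hs j.
have : eigenvalue A (s 0 j).
  rewrite eigenvalue_root_char hs /root horner_prod (bigD1 j) //=.
  by rewrite hornerXsubC subrr mul0r.
case/eigenvalueP => v Hv vnz.
have := pA v vnz; rewrite Hv -scalemxAl mxE.
have : 0 <= (v *m v^T) 0 0.
  rewrite mxE; apply: sumr_ge0 => i _; rewrite mxE -expr2; exact: sqr_ge0.
rewrite le0r => /orP [/eqP -> |]; first by rewrite mulr0 ltxx.
by move=> h; rewrite pmulr_lgt0.
Qed.

Lemma eig_tr (R : fieldType) n (A : 'M[R]_n) (s : 'rV[R]_n) :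
  eigvals_vec A s -> \tr A = \sum_j s 0 j.
Proof.
case: n A s => [|n] A s hs.
  by rewrite /mxtrace !big_ord0.
apply: oppr_inj; rewrite -char_poly_trace //= hs.
have -> : \prod_(j < n.+1) ('X - (s 0 j)%:P) =
   \prod_(p <- [seq s 0 j | j <- enum 'I_n.+1]) ('X - p%:P).
  by rewrite big_map big_enum.
have h := @coefPn_prod_XsubC R [seq s 0 j | j <- enum 'I_n.+1].
rewrite size_map size_enum_ord /= in h.
by rewrite h // big_map big_enum.
Qed.

Lemma amgm2 (R : realFieldType) (x y : R) : 0 < x -> 0 < y -> 2 <= x / y + y / x.
Proof.
move=> hx hy; rewrite -subr_ge0.
have -> : x / y + y / x - 2 = (x - y) ^+ 2 / (x * y).
  by field; apply/andP; split; rewrite gt_eqF.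
by apply: divr_ge0; [exact: sqr_ge0 | exact: ltW (mulr_gt0 hx hy)].
Qed.

Lemma hm_am (R : realFieldType) (T : finType) (f : T -> R) :
  (forall i, 0 < f i) -> #|T|%:R ^+ 2 <= (\sum_i f i) * (\sum_i (f i)^-1).
Proof.
move=> hf.
have -> : (\sum_i f i) * (\sum_i (f i)^-1) = \sum_i \sum_j f i / f j.
  by rewrite mulr_suml; apply: eq_bigr => i _; rewrite mulr_sumr.
set S := \sum_i _.
have h2 : 2 * S = \sum_i \sum_j (f i / f j + f j / f i).
  rewrite mulr2n mulrDl mul1r {1}/S [in X in _ + X = _]/S [in X in _ + X = _]exchange_big /=.
  rewrite -big_split /=; apply: eq_bigr => i _; by rewrite -big_split.
have : 2 * #|T|%:R ^+ 2 <= 2 * S.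
  rewrite h2.
  have -> : 2 * #|T|%:R ^+ 2 = \sum_(i : T) \sum_(j : T) (2 : R).
    by rewrite !sumr_const -mulrnA -[RHS]mulr_natr natrM -expr2.
  apply: ler_sum => i _; apply: ler_sum => j _; exact: amgm2.
by rewrite ler_pM2l.
Qed.

Lemma inv_diag (R : fieldType) n (d : 'rV[R]_n) :
  (forall j, d 0 j != 0) -> invmx (diag_mx d) = diag_mx (\row_j (d 0 j)^-1).
Proof.
move=> hd.
have h : diag_mx (\row_j (d 0 j)^-1) *m diag_mx d = 1%:M.
  rewrite mulmx_diag -diag_const_mx; congr diag_mx; apply/rowP => j.
  by rewrite !mxE mulVf.
have [_ u] := mulmx1_unit h.
by rewrite -[RHS](mulmxK u) h mul1mx.
Qed.

Theorem theorem1 (R : rcfType) (nu K C I : nat)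
  (hnu : (0 < nu)%N) (hK : (0 < K)%N) (hC : (0 < C)%N) (hI : (0 < I)%N)
  (Shalf : nat -> 'I_C -> 'I_K -> 'M[R]_nu)
  (Isig : nat -> 'I_C -> 'M[R]_(K * (nu * nu)))
  (lam : 'I_C -> 'I_K -> 'rV[R]_nu) :
  (forall i c k, (i <= I)%N -> posdef_mx ((Shalf i c k)^T *m Shalf i c k)) ->
  (forall i c, (i < I)%N ->
     psd_mx (Isig i c) /\ psd_mx (1%:M - Isig i c) /\
     colvec (Shalf i.+1 c) = Isig i c *m colvec (Shalf i c)) ->
  (forall c k, eigvals_vec ((Shalf I c k)^T *m Shalf I c k) (lam c k)) ->
  let SigmaL (k : 'I_K) : 'M[R]_nu :=
    invmx (C%:R^-1 *: \sum_(c < C) invmx (diag_mx (lam c k))) in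
  \sum_(k < K) \tr (invmx (SigmaL k)) >=
    (nu ^ 2 * K ^ 2)%:R / C%:R *
    \sum_(c < C) (\sum_(k < K) \tr ((Shalf 0%N c k)^T *m Shalf 0%N c k))^-1.
Proof.
move=> Hpd Hupd Heig /=.
have Tdec : forall c i, (i <= I)%N ->
    \sum_k \tr ((Shalf i c k)^T *m Shalf i c k) <=
    \sum_k \tr ((Shalf 0%N c k)^T *m Shalf 0%N c k).
  move=> c; elim=> [|i IH] hi; first exact: lexx.
  apply: le_trans (IH (ltnW hi)).
  rewrite (@sum_tr_colvec _ _ _ (Shalf i.+1 c)) (@sum_tr_colvec _ _ _ (Shalf i c)).
  have [p1 [p2 e]] := Hupd i c hi.
  rewrite e; exact: contract.
have lpos : forall c k j, 0 < lam c k 0 j.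
  move=> c k; apply: eig_pos (Heig c k); exact: Hpd.
have trI : forall c, \sum_k \tr ((Shalf I c k)^T *m Shalf I c k) =
    \sum_k \sum_j lam c k 0 j.
  move=> c; apply: eq_bigr => k _; exact: eig_tr (Heig c k).
have LHS : forall k, \tr (invmx (invmx (C%:R^-1 *: \sum_(c < C) invmx (diag_mx (lam c k))))) =
    C%:R^-1 * \sum_c \sum_j (lam c k 0 j)^-1.
  move=> k; rewrite invmxK mxtraceZ raddf_sum /=; congr (_ * _).
  apply: eq_bigr => c _; rewrite inv_diag ?mxtrace_diag.
    by apply: eq_bigr => j _; rewrite mxE.
  by move=> j; rewrite gt_eqF.
rewrite (eq_bigr _ (fun k _ => LHS k)).
rewrite -mulr_sumr exchange_big /= mulrAC [X in X <= _]mulrC.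
have Cpos : 0 < C%:R^-1 :> R by rewrite invr_gt0 ltr0n.
rewrite ler_pM2l // mulr_sumr; apply: ler_sum => c _.
set X := \sum_k \sum_j (lam c k 0 j)^-1.
set T0 := \sum_k _.
have hm := @hm_am _ _ (fun p : 'I_K * 'I_nu => lam c p.1 0 p.2) (fun p => lpos _ _ _).
rewrite card_prod !card_ord -(pair_big xpredT xpredT (fun k j => lam c k 0 j)) /= in hm.
rewrite -(pair_big xpredT xpredT (fun k j => (lam c k 0 j)^-1)) /= -/X -trI in hm.
set TI := \sum_k _ in hm.
have TIle : TI <= T0 by apply: Tdec.
have Xge : 0 <= X by apply: sumr_ge0 => k _; apply: sumr_ge0 => j _; rewrite invr_ge0 ltW.
have kpos : 0 < (K * nu)%:R ^+ 2 :> R by rewrite exprn_gt0 // ltr0n muln_gt0 hK hnu.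
have TIge : 0 <= TI.
  rewrite /TI trI; apply: sumr_ge0 => k _; apply: sumr_ge0 => j _; exact: ltW.
have TIpos : 0 < TI.
  rewrite lt0r TIge andbT; apply/eqP => h0.
  by move: (lt_le_trans kpos hm); rewrite h0 mul0r ltxx.
have T0pos : 0 < T0 := lt_le_trans TIpos TIle.
rewrite ler_pdivrMr // (_ : (nu ^ 2 * K ^ 2)%:R = (K * nu)%:R ^+ 2); last first.
  by rewrite -natrX expnMn mulnC.
apply: le_trans hm _; rewrite mulrC; exact: ler_wpM2l.
Qed.
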